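(* Let $\varepsilon>0$ and let $G$ be an $n$-vertex graph with $e(G)\geq 2n/\varepsilon$. Then there exists a set $\mathcal{M}$ of edge-disjoint matchings in $G$ such that (M1) $|\mathcal{M}|\leq 2n$; (M2) $\left|E(G)\setminus\bigcup_{M\in\mathcal{M}}M\right|\leq 2\varepsilon e(G)$; and (M3) $|M|\geq\frac{\varepsilon e(G)}{2n}$ for every $M\in\mathcal{M}$.
   Context: A matching is a set of pairwise vertex-disjoint edges; $e(G)$ is the number of edges of $G$. *)

(* Defs.v *)
From mathcomp Require Import all_boot all_order all_algebra.
Set Implicit Arguments. Unset Strict Implicit. Unset Printing Implicit Defensive.

(* A (simple) graph on vertex set 'I_n is given by its edge set:
   a set of 2-element subsets of 'I_n. *)
Definition simple_graph (n : nat) (E : {set {set 'I_n}}) : bool :=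
  [forall e in E, #|e| == 2].

Definition matching (n : nat) (M : {set {set 'I_n}}) : bool :=
  [forall e in M, forall f in M, (e != f) ==> [disjoint e & f]].

Definition matching_in (n : nat) (E M : {set {set 'I_n}}) : bool :=
  (M \subset E) && matching M.

Definition edge_disjoint_matchings (n : nat) (E : {set {set 'I_n}})
  (MM : {set {set {set 'I_n}}}) : bool :=
  [forall M in MM, matching_in E M] &&
  [forall M in MM, forall M' in MM, (M != M') ==> [disjoint M & M']].

(* Main.v *)
Require Import Defs.
From mathcomp Require Import all_boot all_order all_algebra.
From mathcomp Require Import ring lra.
Import Order.TTheory GRing.Theory Num.Theory.
Local Open Scope ring_scope.

Lemma two_set n (e : {set 'I_n}) x : #|e| = 2%N -> x \in e ->
  exists y, y != x /\ e = [set x; y].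
Proof.
move=> he xe.
have : #|e :\ x| == 1%N by move: he; rewrite (cardsD1 x) xe add1n => -[->].
case/cards1P=> y hy; exists y; split.
  have : y \in e :\ x by rewrite hy set11.
  by rewrite in_setD1 => /andP[].
by rewrite -(setD1K xe) hy.
Qed.

Definition col n (e : {set 'I_n}) : nat := ((\sum_(i in e) (i : nat)) %% n)%N.

Arguments col {n}.
Definition Mk n (E : {set {set 'I_n}}) (k : 'I_n) : {set {set 'I_n}} :=
  [set e in E | col e == k].

Arguments Mk {n}.
Lemma col2 n (x y : 'I_n) : y != x -> col [set x; y] = ((x + y) %% n)%N.
Proof.
move=> yx; rewrite /col big_setU1 /= ?big_set1 // in_set1 eq_sym //.
Qed.

Lemma Mk_matching n (E : {set {set 'I_n}}) k : simple_graph E -> matching (Mk E k).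
Proof.
move=> /forallP sg; apply/forallP => e; apply/implyP => he.
apply/forallP => f; apply/implyP => hf; apply/implyP => nef.
move: he hf; rewrite !inE => /andP[eE ce] /andP[fE cf].
apply/pred0P => x /=; apply/negbTE/negP => /andP[xe xf].
have := sg e; rewrite eE /= => /eqP /two_set /(_ xe) [y [yx ee]].
have := sg f; rewrite fE /= => /eqP /two_set /(_ xf) [z [zx ff]].
move: ce cf; rewrite ee ff !col2 // => /eqP c1 /eqP c2.
have : (x + y == x + z %[mod n])%N by rewrite c1 c2.
rewrite eqn_modDl !modn_small // => /eqP yz.
by move: nef; rewrite ee ff (_ : y = z) ?eqxx //; apply: val_inj.
Qed.

Lemma card_bigcup_le (I T : finType) (S : {pred I}) (F : I -> {set T}) :
  (#|\bigcup_(k in S) F k| <= \sum_(k in S) #|F k|)%N.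
Proof.
elim/big_rec2: _ => [|i B m _ IH]; first by rewrite cards0.
by apply: leq_trans (leq_card_setU _ _) _; rewrite leq_add2l.
Qed.

Theorem corollary21 (R : realFieldType) (eps : R) (n : nat)
  (E : {set {set 'I_n}}) :
  0 < eps -> simple_graph E ->
  2 * n%:R / eps <= #|E|%:R ->
  exists MM : {set {set {set 'I_n}}},
    [/\ edge_disjoint_matchings E MM,
        (#|MM| <= 2 * n)%N,
        #|E :\: \bigcup_(M in MM) M|%:R <= 2 * eps * #|E|%:R
      & forall M, M \in MM -> eps * #|E|%:R / (2 * n%:R) <= #|M|%:R].
Proof.
move=> eps0 sg _.
set thr := eps * #|E|%:R / (2 * n%:R).
pose Ms := [set Mk E k | k : 'I_n].
pose MM := [set M in Ms | thr <= #|M|%:R].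
exists MM; split.
- apply/andP; split.
    apply/forallP => M; apply/implyP; rewrite !inE => /andP[/imsetP[k _ ->] _].
    apply/andP; split; last exact: Mk_matching.
    by apply/subsetP => e; rewrite inE => /andP[].
  apply/forallP => M; apply/implyP; rewrite !inE => /andP[/imsetP[k _ ->] _].
  apply/forallP => M'; apply/implyP; rewrite !inE => /andP[/imsetP[k' _ ->] _].
  apply/implyP => nkk.
  have kk : k != k' by apply: contraNneq nkk => ->.
  apply/pred0P => e /=; rewrite !inE.
  apply/negbTE/negP => /andP[/andP[_ /eqP c1] /andP[_ /eqP c2]].
  by move: kk; rewrite -(inj_eq val_inj) /= -c1 -c2 eqxx.
- have h1 : (#|MM| <= #|Ms|)%N.
    by apply: subset_leq_card; apply/subsetP => M; rewrite inE => /andP[].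
  have h2 : (#|Ms| <= n)%N.
    by apply: leq_trans (leq_imset_card _ _) _; rewrite card_ord.
  by apply: leq_trans h1 (leq_trans h2 _); rewrite mul2n -addnn leq_addr.
- pose S := [set k : 'I_n | #|Mk E k|%:R < thr].
  have sub : E :\: \bigcup_(M in MM) M \subset \bigcup_(k in S) Mk E k.
    apply/subsetP => e; rewrite inE => /andP[nU eE].
    have := (forallP sg) e; rewrite eE /= => /cards2P [v [w [_ _]]].
    have n0 : (0 < n)%N by apply: leq_ltn_trans (leq0n v) (ltn_ord v).
    pose k := Ordinal (ltn_pmod (\sum_(i in e) (i : nat)) n0).
    have ek : e \in Mk E k by rewrite !inE eE /=; apply/eqP.
    apply/bigcupP; exists k => //; rewrite inE ltNge; apply/negP => hk.
    move/negP: nU; apply; apply/bigcupP; exists (Mk E k) => //.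
    by rewrite inE hk andbT; apply/imsetP; exists k.
  have thr0 : 0 <= thr.
    by rewrite /thr divr_ge0 ?mulr_ge0 ?ler0n ?(ltW eps0).
  apply: le_trans (_ : thr *+ n <= _).
    apply: le_trans (_ : (\sum_(k in S) #|Mk E k|)%:R <= _).
      by rewrite ler_nat (leq_trans (subset_leq_card sub)) ?card_bigcup_le.
    rewrite natr_sum.
    apply: le_trans (_ : \sum_(k in S) thr <= _).
      by apply: ler_sum => k; rewrite inE => /ltW.
    rewrite sumr_const; apply: ler_wpMn2l => //.
    by rewrite -[X in (_ <= X)%N](card_ord n) subset_leq_card ?subset_predT.
  have e0 : 0 <= eps * #|E|%:R by rewrite mulr_ge0 ?ler0n ?(ltW eps0).
  case: (posnP n) => [n0|n0].
    have -> : thr *+ n = 0 by rewrite n0.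
    by rewrite -mulrA mulr_ge0.
  have nz : n%:R != 0 :> R by rewrite pnatr_eq0 -lt0n.
  have -> : thr *+ n = eps * #|E|%:R / 2.
    by rewrite -[thr *+ n]mulr_natr /thr; field.
  rewrite -[2 * eps * _]mulrA; lra.
- by move=> M; rewrite inE => /andP[].
Qed.
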